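(* Let $\Delta$ be a closed pure simplicial complex of dimension $m-1\ge2$ whose clique decomposition $\Delta=\Delta_1\cup\cdots\cup\Delta_r$ satisfies conditions (i) and (ii) below, and let $G_\Delta$ be its graph. Then each vertex $v_i$ of $G_\Delta$ has degree at most $\min\{|V(\Delta_i)|,\,2\dim\Delta\}$.
   Context: $\Delta$ is a pure $(m-1)$-dimensional simplicial complex on $[n]$. Clique decomposition: let $\mathcal{S}$ be the set of simplices $\Gamma$ with vertices in $[n]$, $\dim\Gamma\ge m-1$, whose $(m-1)$-skeleton is contained in $\Delta$; the maximal elements $\Gamma_1,\dots,\Gamma_r$ of $\mathcal{S}$ give the cliques $\Delta_i=\Gamma_i^{(m-1)}$, $\Delta=\Delta_1\cup\cdots\cup\Delta_r$; $V(\Delta_i)$ is the vertex set of $\Delta_i$. Conditions: (i) $|V(\Delta_i)\cap V(\Delta_j)|\le1$ for all $i<j$; (ii) $V(\Delta_i)\cap V(\Delta_j)\cap V(\Delta_k)=\emptyset$ for all $i<j<k$. For such $\Delta$, $G_\Delta$ is the simple graph on vertices $v_1,\dots,v_r$ with an edge $\{v_i,v_j\}$ ($i\ne j$) iff $V(\Delta_i)\cap V(\Delta_j)\ne\emptyset$. $\Delta$ is closed with respect to a labeling of its vertices by $[n]$ if for any two facets $F=\{a_1<\dots<a_m\}$, $G=\{b_1<\dots<b_m\}$ with $a_i=b_i$ for some $i$, every $m$-subset of $F\cup G$ is a facet of $\Delta$; $\Delta$ is closed if some labeling makes it closed. *)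

(* Defs.v *)
From mathcomp Require Import all_boot all_order.
From mathcomp Require Import fingroup perm.
Set Implicit Arguments. Unset Strict Implicit. Unset Printing Implicit Defensive.

(* A pure (m-1)-dimensional simplicial complex on the vertex set 'I_n
   (= [n]) is represented by its set of facets  Fc : {set {set 'I_n}},
   every facet having exactly m vertices.  The faces are all subsets of
   facets; the (m-1)-dimensional faces are exactly the facets. *)

Definition pure_complex (n m : nat) (Fc : {set {set 'I_n}}) : bool :=
  (Fc != set0) && [forall f in Fc, #|f| == m].

(* Gam is a simplex of dimension >= m-1 whose (m-1)-skeleton is contained
   in Delta: every m-subset of Gam is a facet of Delta. *)
Definition skel_in (n m : nat) (Fc : {set {set 'I_n}}) (Gam : {set 'I_n}) : bool :=
  (m <= #|Gam|) && [forall S : {set 'I_n}, (S \subset Gam) && (#|S| == m) ==> (S \in Fc)].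

(* The cliques: maximal elements Gamma_i of the family above.  Since the
   (m-1)-skeleton of Gamma_i has vertex set Gamma_i, V(Delta_i) = Gamma_i;
   we index the cliques (the vertices v_i of G_Delta) by these sets. *)
Definition cliques (n m : nat) (Fc : {set {set 'I_n}}) : {set {set 'I_n}} :=
  [set Gam | maxset (skel_in m Fc) Gam].

Definition cond_i (n m : nat) (Fc : {set {set 'I_n}}) : Prop :=
  forall A B, A \in cliques m Fc -> B \in cliques m Fc -> A != B ->
    #|A :&: B| <= 1.

Definition cond_ii (n m : nat) (Fc : {set {set 'I_n}}) : Prop :=
  forall A B C, A \in cliques m Fc -> B \in cliques m Fc -> C \in cliques m Fc ->
    A != B -> A != C -> B != C -> A :&: B :&: C = set0.

Definition G_degree (n m : nat) (Fc : {set {set 'I_n}}) (A : {set 'I_n}) : nat :=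
  #|[set B in cliques m Fc | (B != A) && (A :&: B != set0)]|.

(* Closedness w.r.t. the labeling given by the natural order of 'I_n.
   For facets f = {a_1<..<a_m}, g = {b_1<..<b_m}: a_i = b_i for some i
   iff some common vertex x has the same position in f and in g, i.e. the
   same number of smaller elements. *)
Definition closed_nat (n m : nat) (Fc : {set {set 'I_n}}) : Prop :=
  forall f g, f \in Fc -> g \in Fc ->
    (exists x, [/\ x \in f, x \in g &
        #|[set y in f | (y < x)%N]| = #|[set y in g | (y < x)%N]|]) ->
    forall S : {set 'I_n}, S \subset f :|: g -> #|S| = m -> S \in Fc.

Definition closed_complex (n m : nat) (Fc : {set {set 'I_n}}) : Prop :=
  exists p : {perm 'I_n}, closed_nat m [set p @: f | f : {set 'I_n} in Fc].

(* Main.v *)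
Require Import Defs.
From mathcomp Require Import all_boot all_order.
From mathcomp Require Import fingroup perm zify.

Set Implicit Arguments. Unset Strict Implicit. Unset Printing Implicit Defensive.

Lemma pick_sub (T : finType) (S : {set T}) k :
  k <= #|S| -> exists2 U : {set T}, U \subset S & #|U| = k.
Proof.
elim: k => [|k IH] H; first by exists set0; rewrite ?sub0set ?cards0.
have [U sU cU] := IH (ltnW H).
have : (0 < #|S :\: U|).
  by rewrite cardsD (setIidPr sU); lia.
rewrite card_gt0 => /set0Pn [z]; rewrite inE => /andP [zU zS].
exists (z |: U); first by rewrite subUset sub1set zS sU.
by rewrite cardsU1 zU cU.
Qed.

Lemma inj_bound (T : finType) (X : {set T}) (h : T -> nat) c :
  {in X &, injective h} -> (forall x, x \in X -> h x < c) -> #|X| <= c.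
Proof.
move=> hi hb.
rewrite cardE -(size_map h) -[c](size_iota 0).
apply: uniq_leq_size.
  by rewrite map_inj_in_uniq ?enum_uniq // => x y; rewrite !mem_enum; apply: hi.
move=> y /mapP [x]; rewrite mem_enum => xX ->.
by rewrite mem_iota add0n hb.
Qed.

Definition lo n (p : {perm 'I_n}) (f : {set 'I_n}) x := #|[set y in f | (p y < p x)%N]|.
Definition hi n (p : {perm 'I_n}) (f : {set 'I_n}) x := #|[set y in f | (p x < p y)%N]|.

Lemma lo_inj n (p : {perm 'I_n}) (A : {set 'I_n}) : {in A &, injective (lo p A)}.
Proof.
have key : forall x y, (p x < p y)%N -> x \in A -> lo p A x < lo p A y.
  move=> x y lt xA; apply: proper_card; apply/properP; split.
    apply/subsetP => z; rewrite !inE => /andP [-> /= h]; lia.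
  by exists x; rewrite !inE ?xA ?lt ?ltnn //=.
move=> x y xA yA e; suff: nat_of_ord (p x) = p y by move/val_inj/perm_inj.
case: (ltngtP (p x) (p y)) => // h.
  by have := key _ _ h xA; rewrite e ltnn.
by have := key _ _ h yA; rewrite e ltnn.
Qed.

Lemma hi_inj n (p : {perm 'I_n}) (A : {set 'I_n}) : {in A &, injective (hi p A)}.
Proof.
have key : forall x y, (p x < p y)%N -> y \in A -> hi p A y < hi p A x.
  move=> x y lt yA; apply: proper_card; apply/properP; split.
    apply/subsetP => z; rewrite !inE => /andP [-> /= h]; lia.
  by exists y; rewrite !inE ?yA ?lt ?ltnn //=.
move=> x y xA yA e; suff: nat_of_ord (p x) = p y by move/val_inj/perm_inj.
case: (ltngtP (p x) (p y)) => // h.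
  by have := key _ _ h yA; rewrite e ltnn.
by have := key _ _ h xA; rewrite e ltnn.
Qed.

Lemma card_lt_perm n (p : {perm 'I_n}) (f : {set 'I_n}) x :
  #|[set y in p @: f | (y < p x)%N]| = lo p f x.
Proof.
rewrite /lo.
suff -> : [set y in p @: f | (y < p x)%N] = p @: [set y in f | (p y < p x)%N].
  by rewrite card_imset //; exact: perm_inj.
apply/setP => y; rewrite inE -[y](permKV p).
by rewrite !(mem_imset _ _ (@perm_inj _ p)) inE.
Qed.

Lemma closed_tr n m (Fc : {set {set 'I_n}}) (p : {perm 'I_n}) :
  closed_nat m [set p @: f | f : {set 'I_n} in Fc] ->
  forall f g x, f \in Fc -> g \in Fc -> x \in f -> x \in g -> lo p f x = lo p g x ->
  forall S : {set 'I_n}, S \subset f :|: g -> #|S| = m -> S \in Fc.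
Proof.
move=> cl f g x fF gF xf xg e S sS cS.
have pinj := @perm_inj _ p.
have : p @: S \in [set p @: f | f : {set 'I_n} in Fc].
apply: (cl (p @: f) (p @: g) (imset_f _ fF) (imset_f _ gF)).
- exists (p x); split; try exact: imset_f.
  by rewrite !card_lt_perm.
- by rewrite -imsetU; apply: imsetS.
- by rewrite card_imset.
move=> /imsetP [f0 f0F /(imset_inj pinj) ->] //.
Qed.

Lemma build_F n m (p : {perm 'I_n}) (A : {set 'I_n}) x t :
  x \in A -> 0 < m -> t <= lo p A x -> m - 1 - t <= hi p A x -> t <= m - 1 ->
  exists F : {set 'I_n}, [/\ F \subset A, x \in F, #|F| = m & lo p F x = t].
Proof.
move=> xA m0 tl th tm.
have [L sL cL] := pick_sub tl.
have [U sU cU] := pick_sub th.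
exists (x |: (L :|: U)).
have xL : x \notin L.
  by apply/negP => /(subsetP sL); rewrite inE ltnn andbF.
have xU : x \notin U.
  by apply/negP => /(subsetP sU); rewrite inE ltnn andbF.
have LU : L :&: U = set0.
  apply/setP => z; rewrite !inE; apply/negP => /andP [/(subsetP sL) + /(subsetP sU)].
  rewrite !inE => /andP [_ h1] /andP [_ h2]; lia.
split.
- rewrite subUset sub1set xA subUset /=.
  apply/andP; split.
    by apply/subsetP => z /(subsetP sL); rewrite inE => /andP [].
  by apply/subsetP => z /(subsetP sU); rewrite inE => /andP [].
- by rewrite setU11.
- have := cardsUI L U; rewrite LU cards0 cardsU1 inE negb_or xL xU cL cU /=; lia.
- rewrite /lo -cL; apply: eq_card => z; rewrite !inE.
  case: (eqVneq z x) => [->|zx] /=; first by rewrite ltnn (negbTE xL).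
  case zL: (z \in L) => /=.
    by move/(subsetP sL): zL; rewrite inE => /andP [].
  case zU: (z \in U) => //=.
  by move/(subsetP sU): zU; rewrite inE => /andP [_ h]; apply/negP => h'; lia.
Qed.

Lemma skel_sub n m (Fc : {set {set 'I_n}}) (C S : {set 'I_n}) :
  skel_in m Fc C -> S \subset C -> #|S| = m -> S \in Fc.
Proof.
case/andP => _ /forallP H sS cS; have := H S; rewrite sS cS eqxx /=; exact.
Qed.

Theorem lemma3p1 (n m : nat) (Fc : {set {set 'I_n}}) :
  2 <= m - 1 ->
  pure_complex m Fc ->
  closed_complex m Fc ->
  cond_i m Fc ->
  cond_ii m Fc ->
  forall A, A \in cliques m Fc ->
    G_degree m Fc A <= minn #|A| (2 * (m - 1)).
Proof.
move=> hm _ [p cl] ci cii A Acl.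
have cl' := closed_tr cl.
have skC : forall C, C \in cliques m Fc -> skel_in m Fc C.
  by move=> C; rewrite inE => /maxsetp.
have cardC : forall C, C \in cliques m Fc -> m <= #|C|.
  by move=> C /skC /andP [].
have key : forall B x, B \in cliques m Fc -> B != A -> x \in A -> x \in B ->
    (lo p A x < m - 1) || (hi p A x < m - 1).
  move=> B x Bcl BA xA xB.
  rewrite !ltnNge -negb_and; apply/negP => /andP [l h].
  have cB := cardC _ Bcl.
  have : m - 1 <= #|B :\ x|.
    by move: (cardsD1 x B); rewrite xB /= => e; move: cB; rewrite e; lia.
  case/pick_sub => U sU cU.
  have xU : x \notin U by apply/negP => /(subsetP sU); rewrite !inE eqxx.
  have sG : x |: U \subset B.
    rewrite subUset sub1set xB /=; apply/subsetP => z /(subsetP sU).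
    by rewrite inE => /andP [].
  have cG : #|x |: U| = m by rewrite cardsU1 xU cU /=; lia.
  have xG : x \in x |: U by rewrite setU11.
  have tm : lo p (x |: U) x <= m - 1.
    have : #|(x |: U) :\ x| = m - 1 by move: (cardsD1 x (x |: U)); rewrite xG cG /=; lia.
    move <-; apply: subset_leq_card; apply/subsetP => z; rewrite !inE.
    case/andP => -> h'; rewrite andbT; apply/negP => /eqP zx; move: h'; rewrite zx ltnn.
    done.
  have [F [sF xF cF eF]] := @build_F n m p A x (lo p (x |: U) x) xA (ltn_trans (isT : 0 < 1) (leq_trans (isT : 1 < 2) (leq_trans hm (leq_subr _ _)))) (leq_trans tm l) (leq_trans (leq_subr _ _) h) tm.
  have FF : F \in Fc by apply: (skel_sub (skC _ Acl)).
  have GF : x |: U \in Fc by apply: (skel_sub (skC _ Bcl)).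
  have cl2 := cl' F (x |: U) x FF GF xF xG eF.
  have skFG : skel_in m Fc (F :|: (x |: U)).
    apply/andP; split.
      by rewrite -cF; apply: subset_leq_card; apply: subsetUl.
    apply/forallP => S; apply/implyP => /andP [sS /eqP cS]; exact: cl2.
  have [C mC sC] := maxset_exists skFG.
  have Ccl : C \in cliques m Fc by rewrite inE.
  have big : forall D, D \in cliques m Fc -> F \subset D -> C = D.
    move=> D Dcl sD; apply/eqP; apply/negP => /negP CD.
    have := ci _ _ Ccl Dcl CD.
    have : F \subset C :&: D.
      by rewrite subsetI sD andbT; apply: subset_trans sC; apply: subsetUl.
    move/subset_leq_card; rewrite cF => h1 h2.
    move: (leq_trans h1 h2); apply/negP; rewrite -ltnNge.
    exact: leq_trans hm (leq_subr _ _).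
  have CA := big _ Acl sF.
  have CB : C = B.
    apply/eqP; apply/negP => /negP CD.
    have := ci _ _ Ccl Bcl CD.
    have : x |: U \subset C :&: B.
      by rewrite subsetI sG andbT; apply: subset_trans sC; apply: subsetUr.
    move/subset_leq_card; rewrite cG => h1 h2.
    move: (leq_trans h1 h2); apply/negP; rewrite -ltnNge.
    exact: leq_trans hm (leq_subr _ _).
  by move: BA; rewrite -CB CA eqxx.
pose N := [set B in cliques m Fc | (B != A) && (A :&: B != set0)].
have [a0 a0A] : exists a0, a0 \in A.
  apply/set0Pn; rewrite -card_gt0; apply: leq_trans (cardC _ Acl).
  exact: leq_trans (isT: 0 < 2) (leq_trans hm (leq_subr _ _)).
pose phi B := odflt a0 [pick z in A :&: B].
have phiP : forall B, B \in N -> phi B \in A :&: B.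
  move=> B; rewrite inE => /andP [_ /andP [_ ne]]; rewrite /phi; case: pickP => [z //|none].
  by case/set0Pn: ne => z; rewrite (none z).
have phi_inj : {in N &, injective phi}.
  move=> B B' BN B'N e; apply/eqP; apply/negP => /negP BB'.
  have := phiP _ BN; have := phiP _ B'N; rewrite -e !inE => /andP [_ xB'] /andP [xA xB].
  move: BN B'N; rewrite [B \in N]inE [B' \in N]inE => /andP [Bcl /andP [BA _]] /andP [B'cl /andP [B'A _]].
  have := cii _ _ _ Acl Bcl B'cl; rewrite eq_sym BA eq_sym B'A BB' => /(_ isT isT isT).
  by move/setP/(_ (phi B)); rewrite !inE xA xB xB'.
have -> : G_degree m Fc A = #|phi @: N| by rewrite card_in_imset.
rewrite leq_min; apply/andP; split.
  apply: subset_leq_card; apply/subsetP => y /imsetP [B BN ->].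
  by have := phiP _ BN; rewrite inE => /andP [].
pose X1 := [set x in A | lo p A x < m - 1].
pose X2 := [set x in A | hi p A x < m - 1].
have c1 : #|X1| <= m - 1.
  apply: (@inj_bound _ X1 (lo p A)).
    move=> x y; rewrite !inE => /andP [xA _] /andP [yA _]; exact: lo_inj.
  by move=> x; rewrite inE => /andP [].
have c2 : #|X2| <= m - 1.
  apply: (@inj_bound _ X2 (hi p A)).
    move=> x y; rewrite !inE => /andP [xA _] /andP [yA _]; exact: hi_inj.
  by move=> x; rewrite inE => /andP [].
apply: leq_trans (_ : #|X1 :|: X2| <= _).
  apply: subset_leq_card; apply/subsetP => y /imsetP [B BN ->].
  have := phiP _ BN; rewrite inE => /andP [xA xB].
  move: BN; rewrite inE => /andP [Bcl /andP [BA _]].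
  by have := key _ _ Bcl BA xA xB; rewrite !inE xA.
have e := cardsUI X1 X2.
apply: (@leq_trans (#|X1| + #|X2|)).
  by rewrite -e; apply: leq_addr.
by rewrite mul2n -addnn; apply: leq_add.
Qed.
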